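(* Let $\mathbb{K}$ be any field and $n$ a positive integer. Let $S$ be a linear subspace of $\mathrm{A}_n(\mathbb{K})$ such that $\dim S>3$ and every matrix of $S$ has rank at most $2$. Then $S$ is congruent to a subspace of $\mathrm{WA}_{n,1,1}(\mathbb{K})$.
   Context: $\mathrm{A}_n(\mathbb{K})$ is the space of $n\times n$ alternating matrices (skew-symmetric, zero diagonal). Subsets $\mathcal{V},\mathcal{W}$ of $\mathrm{M}_n(\mathbb{K})$ are congruent if $\mathcal{V}=P\mathcal{W}P^T$ for some $P\in\mathrm{GL}_n(\mathbb{K})$. $\mathrm{WA}_{n,1,1}(\mathbb{K})$ is the space of all $M=(m_{i,j})\in\mathrm{A}_n(\mathbb{K})$ with $m_{i,j}=0$ whenever $i>1$ and $j>1$ and $\max(i,j)>2$; equivalently the alternating matrices whose nonzero entries lie in the first row, the first column, or at positions $(1,2),(2,1)$ — i.e. all entries outside the first row and column vanish. *)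

(* Defs.v *)
From HB Require Import structures.
From mathcomp Require Import all_boot all_order all_algebra.
Set Implicit Arguments. Unset Strict Implicit. Unset Printing Implicit Defensive.
Import GRing.Theory.
Local Open Scope ring_scope.

(* Indices are 0-based: the paper's (i,j) is our (i-1, j-1). *)

Definition alternating (K : fieldType) (n : nat) (M : 'M[K]_n) : Prop :=
  M^T = - M /\ forall i : 'I_n, M i i = 0.

(* WA_{n,1,1}(K): alternating M with m_{i,j} = 0 whenever i>1, j>1 and
   max(i,j)>2 (1-based), i.e. (0-based) i>0, j>0, max(i,j)>1. *)
Definition in_WA11 (K : fieldType) (n : nat) (M : 'M[K]_n) : Prop :=
  alternating M /\
  forall i j : 'I_n, (0 < i)%N -> (0 < j)%N -> (1 < maxn i j)%N -> M i j = 0.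

(* Main.v *)
Require Import Defs.
From HB Require Import structures.
From mathcomp Require Import all_boot all_order all_algebra.
From mathcomp Require Import ring.
From Stdlib Require Import Classical.
From mathcomp Require Import zify.
Import GRing.Theory.
Local Open Scope ring_scope.
Set Implicit Arguments. Unset Strict Implicit.

Definition wedge (K : fieldType) (n : nat) (a b : 'rV[K]_n) : 'M[K]_n :=
  a^T *m b - b^T *m a.
Arguments wedge {K n} a b.

Lemma mx11_tr (K : fieldType) (A : 'M[K]_1) : A^T = A.
Proof. by apply/matrixP=> i j; rewrite !ord1 mxE. Qed.

Lemma alt_quad (K : fieldType) (n : nat) (M : 'M[K]_n) :
  alternating M -> forall x : 'cV[K]_n, x^T *m M *m x = 0.
Proof.
move=> [Mt Md] x.
pose U : 'M[K]_n := \matrix_(k, l) (if (k < l)%N then M k l else 0).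
have -> : M = U - U^T.
  apply/matrixP=> k l; rewrite !mxE.
  case: (ltngtP k l) => hkl.
  - by rewrite subr0.
  - by have := congr1 (fun A : 'M_n => A l k) Mt; rewrite !mxE => ->; rewrite sub0r.
  - by rewrite subrr; have /val_inj -> := hkl; rewrite Md.
rewrite mulmxBr mulmxBl.
have -> : x^T *m U^T *m x = (x^T *m U *m x)^T by rewrite !trmx_mul trmxK mulmxA.
by rewrite mx11_tr subrr.
Qed.

Lemma gen_form (K : fieldType) (n r : nat) (Vm : 'M[K]_(r, n)) (X : 'M[K]_(n, r))
  (M : 'M[K]_n) :
  Vm *m X = 1%:M -> M^T = - M -> (M <= Vm)%MS ->
  M = Vm^T *m (X^T *m M *m X) *m Vm.
Proof.
move=> VX Mt /submxP[Z eZ].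
have eZ' : Z = M *m X by rewrite eZ -mulmxA VX mulmx1.
have h0 : M^T = Vm^T *m X^T *m M^T.
  by rewrite {1}eZ trmx_mul eZ' trmx_mul mulmxA.
have h1 : M = Vm^T *m X^T *m M.
  by apply: oppr_inj; rewrite -mulmxN -Mt.
rewrite !mulmxA -h1.
by rewrite -eZ' -eZ.
Qed.

Lemma entry_prod (K : fieldType) (m n p q : nat) (A : 'M[K]_(m, n)) (B : 'M[K]_(n, p))
  (C : 'M[K]_(p, q)) i j :
  (A *m B *m C) i j = (row i A *m B *m col j C) 0 0.
Proof.
have -> : row i A *m B *m col j C = col j (row i (A *m B *m C)).
  by rewrite !colE !row_mul !mulmxA.
by rewrite [in RHS]mxE [in RHS]mxE.
Qed.

Lemma alt_congr (K : fieldType) (n r : nat) (M : 'M[K]_n) (X : 'M[K]_(n, r)) :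
  alternating M -> alternating (X^T *m M *m X).
Proof.
move=> aM; have [Mt _] := aM; split.
  by rewrite !trmx_mul trmxK Mt mulNmx mulmxN mulmxA.
move=> i; rewrite entry_prod -tr_col alt_quad //.
by rewrite mxE.
Qed.

Lemma expand_form (K : fieldType) (n r : nat) (Vm : 'M[K]_(r, n)) (W : 'M[K]_r) :
  Vm^T *m W *m Vm = \sum_i \sum_j W i j *: ((row i Vm)^T *m row j Vm).
Proof.
rewrite {1}[W]matrix_sum_delta mulmx_sumr mulmx_suml.
apply: eq_bigr => i _.
rewrite mulmx_sumr mulmx_suml; apply: eq_bigr => j _.
rewrite -scalemxAr -scalemxAl; congr (_ *: _).
rewrite !rowE trmx_mul trmx_delta -(mul_delta_mx (0 : 'I_1)).
by rewrite !mulmxA.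
Qed.

Lemma alt_anti (K : fieldType) (r : nat) (W : 'M[K]_r) i j :
  alternating W -> W j i = - W i j.
Proof.
by move=> [Wt _]; have := congr1 (fun A : 'M_r => A i j) Wt; rewrite !mxE.
Qed.

Lemma E2 (K : fieldType) (n : nat) (Vm : 'M[K]_(2, n)) (W : 'M[K]_2) :
  alternating W -> Vm^T *m W *m Vm = W 0 1 *: wedge (row 0 Vm) (row 1 Vm).
Proof.
move=> aW; have [_ Wd] := aW.
rewrite expand_form !big_ord_recl !big_ord0 /=.
have -> : (lift ord0 ord0 : 'I_2) = 1 by apply/val_inj.
have -> : (ord0 : 'I_2) = 0 by apply/val_inj.
rewrite !Wd (@alt_anti _ _ W 0 1 aW) !scale0r !addr0 !add0r /wedge scalerBr scaleNr.
by rewrite addrC.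
Qed.

Lemma E3 (K : fieldType) (n : nat) (Vm : 'M[K]_(3, n)) (W : 'M[K]_3) :
  alternating W -> Vm^T *m W *m Vm =
   W 0 1 *: wedge (row 0 Vm) (row 1 Vm) + W 0 2 *: wedge (row 0 Vm) (row 2 Vm)
   + W 1 2 *: wedge (row 1 Vm) (row 2 Vm).
Proof.
move=> aW; have [_ Wd] := aW.
rewrite expand_form !big_ord_recl !big_ord0 /=.
have -> : (lift ord0 (lift ord0 ord0) : 'I_3) = 2 by apply/val_inj.
have -> : (lift ord0 ord0 : 'I_3) = 1 by apply/val_inj.
have -> : (ord0 : 'I_3) = 0 by apply/val_inj.
rewrite !Wd (@alt_anti _ _ W 0 1 aW) (@alt_anti _ _ W 0 2 aW) (@alt_anti _ _ W 1 2 aW).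
rewrite !scale0r !addr0 !add0r /wedge !scalerBr !scaleNr.
set a := _ *: _. set b := _ *: _. set c := _ *: _. set d := _ *: _.
set e := _ *: _. set f := _ *: _.
by rewrite !addrA (addrAC a b) (addrAC (a - c + b) d).
Qed.

Lemma E1 (K : fieldType) (W : 'M[K]_1) : alternating W -> W = 0.
Proof. by move=> [_ Wd]; apply/matrixP=> i j; rewrite !ord1 Wd mxE. Qed.

Definition J4 (K : fieldType) : 'M[K]_(2+2) :=
  wedge (delta_mx 0 (lshift 2 0)) (delta_mx 0 (lshift 2 1))
  + wedge (delta_mx 0 (rshift 2 0)) (delta_mx 0 (rshift 2 1)).

Lemma J4sq (K : fieldType) : J4 K *m J4 K = - 1%:M.
Proof.
apply/matrixP=> i j; rewrite !mxE.
rewrite !big_ord_recl big_ord0 !mxE.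
rewrite !big_ord_recl !big_ord0 !mxE.
case: i => [[|[|[|[|i]]]] Hi] //; case: j => [[|[|[|[|j]]]] Hj] //=.
all: rewrite /= ?mulr1n ?mulr0n ?mul0r ?mulr0 ?mul1r ?mulr1 ?subr0 ?sub0r ?add0r ?addr0.
all: ring.
Qed.

Lemma J4rank (K : fieldType) : \rank (J4 K) = 4.
Proof.
apply/eqP; rewrite eqn_leq rank_leq_row /=.
have := mxrankM_maxl (J4 K) (J4 K); rewrite J4sq.
by rewrite (eqmx_opp 1%:M) mxrank1.
Qed.

Lemma rowbase (K : fieldType) (m n r : nat) (A : 'M[K]_(m, n)) :
  \rank A = r -> exists Vm : 'M[K]_(r, n), row_free Vm /\ (Vm :=: A)%MS.
Proof.
by move=> <-; exists (row_base A); split; [exact: row_base_free | exact: eq_row_base].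
Qed.

Lemma rank_not1 (K : fieldType) (n : nat) (M : 'M[K]_n) :
  alternating M -> \rank M != 1%N.
Proof.
move=> aM; apply/negP => /eqP r1.
have [Vm [fV eV]] := rowbase r1.
have [X VX] := row_freeP fV.
have sMV : (M <= Vm)%MS by rewrite eV.
have eM := gen_form VX aM.1 sMV.
have := E1 (alt_congr X aM); rewrite -/(_ *m _) => W0.
move: r1; rewrite eM W0 mulmx0 mul0mx mxrank0 //.
Qed.

Lemma decomp2 (K : fieldType) (n : nat) (M : 'M[K]_n) :
  alternating M -> \rank M = 2 ->
  exists Vm : 'M[K]_(2, n), [/\ row_free Vm, (Vm :=: M)%MS &
    exists2 c : K, c != 0 & M = c *: wedge (row 0 Vm) (row 1 Vm)].
Proof.
move=> aM r2.
have [Vm [fV eV]] := rowbase r2.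
have [X VX] := row_freeP fV.
have sMV : (M <= Vm)%MS by rewrite eV.
have eM := gen_form VX aM.1 sMV.
exists Vm; split => //.
exists ((X^T *m M *m X) 0 1); last by rewrite {1}eM E2 //; exact: alt_congr.
apply/negP => /eqP c0; move: r2; rewrite eM E2; last exact: alt_congr.
by rewrite c0 scale0r mxrank0.
Qed.

Lemma wedge_congr (K : fieldType) (n r : nat) (X : 'M[K]_(n, r)) (a b : 'rV[K]_n) :
  X^T *m wedge a b *m X = wedge (a *m X) (b *m X).
Proof.
by rewrite /wedge mulmxBr mulmxBl !trmx_mul !mulmxA.
Qed.

Lemma meet (K : fieldType) (n : nat) (M N : 'M[K]_n) :
  alternating M -> alternating N -> \rank M = 2 -> \rank N = 2 ->
  (forall a b : K, \rank (a *: M + b *: N)%R <= 2)%N ->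
  (\rank (M + N)%MS <= 3)%N.
Proof.
move=> aM aN rM rN hr.
have [Vm [fVm eVm [c c0 eM]]] := decomp2 aM rM.
have [Vn [fVn eVn [d d0 eN]]] := decomp2 aN rN.
rewrite leqNgt; apply/negP => h4.
pose A := col_mx Vm Vn.
have fA : row_free A.
  by rewrite /row_free eqn_leq rank_leq_row /= -(addsmxE Vm Vn).1 (adds_eqmx eVm eVn).1.
have [X AX] := row_freeP fA.
have rX : forall i, row i A *m X = delta_mx 0 i by move=> i; rewrite -row_mul AX row1.
have := hr c^-1 d^-1.
rewrite eM eN !scalerA !mulVf // !scale1r => rN'.
pose N' := (wedge (row 0 Vm) (row 1 Vm) + wedge (row 0 Vn) (row 1 Vn))%R.
change (is_true (\rank N' <= 2)%N) in rN'.
have : X^T *m N' *m X = J4 K.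
  rewrite /N' mulmxDr mulmxDl !wedge_congr.
  by rewrite -(rowKu _ Vm Vn) -(rowKu _ Vm Vn) -(rowKd _ Vm Vn) -(rowKd _ Vm Vn) !rX.
move=> eJ.
have := mxrankM_maxl (X^T *m N') X; rewrite eJ J4rank.
have := mxrankM_maxr X^T N'.
move=> h1 h2; have := leq_trans h2 (leq_trans h1 rN'); by [].
Qed.

Lemma det2 (K : fieldType) (al be p0 p1 q0 q1 : K) :
  (al != 0) || (be != 0) -> al * p0 + be * p1 = 0 -> al * q0 + be * q1 = 0 ->
  p0 * q1 - p1 * q0 = 0.
Proof.
move=> /orP[] nz hp hq.
  apply: (mulfI nz); rewrite mulr0.
  have -> : al * (p0 * q1 - p1 * q0) = (al * p0 + be * p1) * q1 - p1 * (al * q0 + be * q1)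
    by ring.
  by rewrite hp hq mul0r mulr0 subr0.
apply: (mulfI nz); rewrite mulr0.
have -> : be * (p0 * q1 - p1 * q0) = p0 * (al * q0 + be * q1) - (al * p0 + be * p1) * q0
  by ring.
by rewrite hp hq mul0r mulr0 subr0.
Qed.

Lemma mx11_mul (K : fieldType) (P Q : 'M[K]_1) : (P *m Q) 0 0 = P 0 0 * Q 0 0.
Proof. by rewrite mxE big_ord1. Qed.

Lemma mx11_scaleB (K : fieldType) (c : K) (P Q : 'M[K]_1) :
  (c *: (P - Q)) 0 0 = c * (P 0 0 - Q 0 0).
Proof. by rewrite !mxE. Qed.

Lemma dot_sym (K : fieldType) (n : nat) (u z : 'rV[K]_n) : (u *m z^T) 0 0 = (z *m u^T) 0 0.
Proof. by rewrite -[u *m z^T]mx11_tr trmx_mul trmxK. Qed.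

Lemma hw_lemma (K : fieldType) (n : nat) (Vm : 'M[K]_(2, n)) (c : K) (w : 'rV[K]_n) :
  w != 0 -> (w <= Vm)%MS ->
  forall x y : 'rV[K]_n, x *m w^T = 0 -> y *m w^T = 0 ->
  x *m (c *: wedge (row 0 Vm) (row 1 Vm)) *m y^T = 0.
Proof.
move=> wnz /submxP[D eD] x y hx hy.
have ew : w = D 0 0 *: row 0 Vm + D 0 1 *: row 1 Vm.
  rewrite eD mulmx_sum_row !big_ord_recl big_ord0 addr0.
  have -> : (lift ord0 ord0 : 'I_2) = 1 by apply/val_inj.
  by have -> : (ord0 : 'I_2) = 0 by apply/val_inj.
set v0 := row 0 Vm; set v1 := row 1 Vm.
have nzD : (D 0 0 != 0) || (D 0 1 != 0).
  rewrite -negb_and; apply/negP => /andP[/eqP h0 /eqP h1].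
  by move: wnz; rewrite ew h0 h1 !scale0r addr0 eqxx.
have lin : forall u : 'rV[K]_n, u *m w^T = 0 ->
    D 0 0 * (u *m v0^T) 0 0 + D 0 1 * (u *m v1^T) 0 0 = 0.
  move=> u hu; have := congr1 (fun A : 'M_1 => A 0 0) hu.
  by rewrite ew linearD !linearZ /= mulmxDr -!scalemxAr !mxE; exact.
rewrite -scalemxAr -scalemxAl /wedge mulmxBr mulmxBl !mulmxA.
rewrite -(mulmxA (x *m v0^T)) -(mulmxA (x *m v1^T)).
apply/matrixP => i j; rewrite !ord1 mx11_scaleB [in RHS]mxE.
rewrite !mx11_mul (dot_sym v1 y) (dot_sym v0 y).
by rewrite (det2 nzD (lin x hx) (lin y hy)) mulr0.
Qed.

Lemma final_P (K : fieldType) (n : nat) (w : 'rV[K]_n) : w != 0 ->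
  exists2 P : 'M[K]_n, P \in unitmx &
    forall i : 'I_n, (0 < i)%N -> row i P *m w^T = 0.
Proof.
move=> wnz; set U := row_ebase w.
exists (invmx U)^T; first by rewrite unitmx_tr unitmx_inv row_ebase_unit.
move=> i i0; rewrite -row_mul -trmx_mul.
have -> : w *m invmx U = col_ebase w *m pid_mx (\rank w).
  by rewrite -{1}(mulmx_ebase w) mulmxK // row_ebase_unit.
apply/matrixP => a b; rewrite !ord1 !mxE.
apply: big1 => k _; rewrite !mxE rank_rV wnz.
case: eqP => [ek|]; last by rewrite andFb mulr0.
by rewrite ek ltnNge i0 andbF mulr0.
Qed.

Lemma rk_le1_sub (K : fieldType) (m p n : nat) (A : 'M[K]_(m, n)) (B : 'M[K]_(p, n)) :
  (A <= B)%MS -> (\rank B <= 1)%N -> A != 0 -> (B <= A)%MS.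
Proof.
move=> sAw rB Anz; have := mxrank_leqif_sup sAw.
move=> [_ <-]; apply/eqP/anti_leq; rewrite mxrankS //=.
by rewrite (leq_trans rB) // lt0n mxrank_eq0.
Qed.

Lemma ar1 (a b : nat) : (a + b = 2 + 2 -> a <= 3 -> 1 <= b)%N.
Proof. lia. Qed.
Lemma ar2 (a b c : nat) : (a + 0 = b + c -> 1 <= b -> 1 <= c -> 2 <= a)%N.
Proof. lia. Qed.

Unset Implicit Arguments.

Theorem proposition1p5 (K : fieldType) (n : nat) (S : {vspace 'M[K]_n}) :
  (0 < n)%N ->
  (forall M, M \in S -> alternating M) ->
  (3 < \dim S)%N ->
  (forall M, M \in S -> (\rank M <= 2)%N) ->
  exists2 P : 'M[K]_n, P \in unitmx &
    forall M, M \in S -> in_WA11 (P *m M *m P^T).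
Proof.
move=> n0 Salt Sdim Srank.
have rk2 : forall M, M \in S -> M != 0 -> \rank M = 2.
  move=> M MS Mnz; have := Srank M MS; have := rank_not1 (Salt M MS).
  have : \rank M != 0 by rewrite mxrank_eq0.
  by case: (\rank M) => [|[|[|]]].
have meetS : forall M N, M \in S -> N \in S -> M != 0 -> N != 0 ->
    (\rank (M + N)%MS <= 3)%N.
  move=> M N MS NS Mnz Nnz; apply: meet; [exact: Salt|exact: Salt|exact: rk2|exact: rk2|].
  by move=> a b; apply: Srank; rewrite memvD // memvZ.
have S0 : S != 0%VS by rewrite -dimv_eq0 -lt0n (ltn_trans _ Sdim).
set M1 := vpick S.
have M1S : M1 \in S by exact: memv_pick.
have M1nz : M1 != 0 by rewrite vpick0.
have [M2 [M2S M2n]] : exists M2, M2 \in S /\ M2 \notin <[M1]>%VS.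
  apply: NNPP => hn; move: Sdim; rewrite ltnNge => /negP; apply.
  apply: (leq_trans (dimvS (_ : S <= <[M1]>)%VS)); last by rewrite dim_vline; case: (_ != 0).
  apply/subvP => M MS; apply: NNPP => hM; apply: hn; exists M; split => //.
  by apply/negP.
have M2nz : M2 != 0 by apply: contraNneq M2n => ->; rewrite mem0v.
have nsub : ~~ (M2 <= M1)%MS.
  apply/negP => sub; move: M2n; apply/negP; rewrite negbK.
  have [Vm [fV eV [c c0 e1]]] := decomp2 (Salt M1 M1S) (rk2 M1 M1S M1nz).
  have [X VX] := row_freeP fV.
  have sMV : (M2 <= Vm)%MS by rewrite eV.
  have := gen_form VX (Salt M2 M2S).1 sMV; rewrite E2; last exact: (alt_congr X (Salt M2 M2S)).
  move=> ->; apply/vlineP; exists ((X^T *m M2 *m X) 0 1 / c).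
  by rewrite e1 scalerA mulfVK.
have r1 := rk2 M1 M1S M1nz; have r2 := rk2 M2 M2S M2nz.
set C := (M1 :&: M2)%MS.
have sc := mxrank_sum_cap M1 M2.
have m12 := meetS M1 M2 M1S M2S M1nz M2nz.
have rC : \rank C = 1.
  apply/eqP; rewrite eqn_leq; apply/andP; split; last first.
    by move: sc m12; rewrite -/C r1 r2; lia.
  rewrite leqNgt; apply/negP => hC.
  have [_ e] := mxrank_leqif_sup (capmxSr M1 M2).
  have : (M2 <= C)%MS.
    rewrite -e -/C r2 eqn_leq hC andbT.
    by rewrite -r2 mxrankS // capmxSr.
  move=> sM2; move: nsub; rewrite (submx_trans sM2) //; exact: capmxSl.
set V := (M1 + M2)%MS.
have rV : \rank V = 3 by move: sc; rewrite -/C -/V rC r1 r2; lia.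
set w := nz_row C.
have Cnz : C != 0 by rewrite -mxrank_eq0 rC.
have wnz : w != 0 by rewrite nz_row_eq0.
have wC : (w <= C)%MS by exact: nz_row_sub.
have Cw : (C <= w)%MS by apply: rk_le1_sub => //; rewrite rC.
pose Hw := fun M : 'M[K]_n => forall x y : 'rV[K]_n,
  x *m w^T = 0 -> y *m w^T = 0 -> x *m M *m y^T = 0.
have dich : forall M, M \in S -> Hw M \/ (M <= V)%MS.
  move=> M MS; have [->|Mnz] := eqVneq M 0; first by right; rewrite sub0mx.
  have rM := rk2 M MS Mnz.
  have [wM|wM] := boolP (w <= M)%MS.
    left; have [Vm [fV eV [c c0 eM]]] := decomp2 (Salt M MS) rM.
    rewrite /Hw eM; apply: hw_lemma => //; by rewrite eV.
  right.
  pose l1 := (M :&: M1)%MS; pose l2 := (M :&: M2)%MS.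
  have s1 := mxrank_sum_cap M M1; have s2 := mxrank_sum_cap M M2.
  have q1 := meetS M M1 MS M1S Mnz M1nz; have q2 := meetS M M2 MS M2S Mnz M2nz.
  have rl1 : (1 <= \rank l1)%N by move: s1; rewrite rM r1 => /ar1; apply.
  have rl2 : (1 <= \rank l2)%N by move: s2; rewrite rM r2 => /ar1; apply.
  have l12 : (l1 :&: l2 <= C)%MS by apply: capmxS; exact: capmxSr.
  have l12M : (l1 :&: l2 <= M)%MS by apply: (submx_trans (capmxSl _ _)); exact: capmxSl.
  have z12 : \rank (l1 :&: l2)%MS = 0.
    apply/eqP; rewrite mxrank_eq0; apply: contraNT wM => nz.
    apply: (submx_trans _ l12M); apply: rk_le1_sub => //.
      exact: (submx_trans l12 Cw).
    by rewrite rank_leq_row.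
  have s12 := mxrank_sum_cap l1 l2.
  have sub12 : (l1 + l2 <= M)%MS by rewrite addsmx_sub !capmxSl.
  have [_ e] := mxrank_leqif_sup sub12.
  have : (M <= l1 + l2)%MS.
    rewrite -e eqn_leq mxrankS //= rM.
    by move: s12; rewrite z12 => /ar2; apply.
  move=> h; apply: (submx_trans h); apply: addsmxS; exact: capmxSr.
have [allH | [M [MS nH]]] :
    (forall M, M \in S -> Hw M) \/ exists M, M \in S /\ ~ Hw M.
  apply: NNPP => h; apply h; left => M MS; apply: NNPP => nH; apply h; right.
  by exists M.
  have [P Pu Pw] := final_P wnz.
  exists P => // M MS; split.
    have := alt_congr P^T (Salt M MS); by rewrite trmxK.
  move=> i j i0 j0 _; rewrite entry_prod -tr_row.
  by rewrite (allH M MS) ?Pw // mxE.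
have MV : (M <= V)%MS by case: (dich M MS).
have allV : forall N, N \in S -> (N <= V)%MS.
  move=> N NS; case: (dich N NS) => // HN.
  have MNS : M + N \in S by rewrite memvD.
  case: (dich _ MNS) => [HMN|sMN].
    exfalso; apply: nH => x y hx hy.
    have := HMN x y hx hy; rewrite mulmxDr mulmxDl HN // addr0 => ->.
    by [].
  have -> : N = (M + N) - M by rewrite addrC addKr.
  by rewrite addmx_sub // (eqmx_opp M).
exfalso.
have [Vm [fV eV]] := rowbase rV.
have [X VX] := row_freeP fV.
pose sp := [:: wedge (row 0 Vm) (row 1 Vm); wedge (row 0 Vm) (row 2 Vm);
               wedge (row 1 Vm) (row 2 Vm)].
have : (S <= <<sp>>)%VS.
  apply/subvP => N NS.
  have sNV : (N <= Vm)%MS by rewrite eV; exact: allV.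
  rewrite (gen_form VX (Salt N NS).1 sNV) E3; last exact: (alt_congr X (Salt N NS)).
  by rewrite !memvD // memvZ // memv_span // !inE eqxx ?orbT.
move/dimvS; rewrite (leqNgt) (leq_trans _ Sdim) //.
exact: (leq_ltn_trans (dim_span sp)).
Qed.
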